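(* Let $\vec K_4$ be the complete digraph on $\{1,2,3,4\}$ (arc $(i,j)$ for all distinct $i,j$). Then $\chi(\partial(\partial(\vec K_4)))\le 3$; explicitly, identifying vertices of $\partial(\partial(\vec K_4))$ with sequences $ijk$ with $i,j,k\in\{1,2,3,4\}$, $i\ne j$, $j\ne k$, the map $c(ijk)=j$ if $j\ne4$ and $c(ijk)=s$ for some $s\in\{1,2,3\}\setminus\{i,k\}$ if $j=4$ is a proper $3$-colouring. Consequently, for every digraph $D$ with $\chi(D)\le 4$, $\chi(\partial(\partial(D)))\le 3$.
   Context: For a digraph $D$ with arc set $A(D)$, $\chi(D)$ is the chromatic number of its underlying graph. $\partial(D)$ has vertex set $A(D)$, with an arc from $(x,y)$ to $(x',y')$ iff $y=x'$. A vertex of $\partial(\partial(\vec K_4))$ is an arc $((i,j),(j,k))$ of $\partial(\vec K_4)$, written $ijk$. *)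

(* Defs.v *)
From mathcomp Require Import all_boot.
Set Implicit Arguments. Unset Strict Implicit. Unset Printing Implicit Defensive.

(* A digraph: a vertex type with an arc relation (loops allowed in general;
   a digraph with a loop is not properly colourable). *)
Record digraph := Digraph { dvert : Type; darc : dvert -> dvert -> Prop }.
Arguments darc : clear implicits.

Definition proper_colouring (D : digraph) (C : Type) (c : dvert D -> C) : Prop :=
  forall x y : dvert D, darc D x y -> c x <> c y.

Definition chi_le (D : digraph) (k : nat) : Prop :=
  exists c : dvert D -> 'I_k, proper_colouring c.

Definition line_digraph (D : digraph) : digraph :=
  @Digraph {p : dvert D * dvert D | darc D p.1 p.2}
           (fun a b => (proj1_sig a).2 = (proj1_sig b).1).

(* Complete digraph on {1,2,3,4}, represented by 'I_4 = {0,1,2,3};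
   paper's vertex m corresponds to m-1, so paper's vertex 4 is 3. *)
Definition K4 : digraph := @Digraph 'I_4 (fun i j => i <> j).

Definition DDK4 : digraph := line_digraph (line_digraph K4).

(* A vertex ((i,j),(j,k)) of ∂∂K4, written ijk. *)
Definition v_i (v : dvert DDK4) : 'I_4 := (proj1_sig (proj1_sig v).1).1.
Definition v_j (v : dvert DDK4) : 'I_4 := (proj1_sig (proj1_sig v).1).2.
Definition v_k (v : dvert DDK4) : 'I_4 := (proj1_sig (proj1_sig v).2).2.

Definition four : 'I_4 := ord_max.

Definition explicit_colouring_spec (c : dvert DDK4 -> 'I_4) : Prop :=
  forall v : dvert DDK4,
    (v_j v <> four -> c v = v_j v) /\
    (v_j v = four -> c v <> four /\ c v <> v_i v /\ c v <> v_k v).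

(* Main.v *)
Require Import Defs.
From mathcomp Require Import all_boot.

Definition coln (i j k : 'I_4) : nat :=
  if j != 3 :> nat then nat_of_ord j
  else if (i != 0 :> nat) && (k != 0 :> nat) then 0
  else if (i != 1 :> nat) && (k != 1 :> nat) then 1 else 2.

Lemma coln_lt (i j k : 'I_4) : coln i j k < 3.
Proof.
case: i j k => [[|[|[|[|?]]]] ?] [[|[|[|[|?]]]] ?] [[|[|[|[|?]]]] ?] //.
Qed.

Definition col (i j k : 'I_4) : 'I_3 := Ordinal (coln_lt i j k).

Lemma col_ok (i j k l : 'I_4) : i <> j -> j <> k -> k <> l -> col i j k <> col j k l.
Proof.
move=> a b d e; have {e} : coln i j k = coln j k l by rewrite -[LHS]/(val (col i j k)) e.
move: a b d.
case: i j k l => [[|[|[|[|?]]]] ?] [[|[|[|[|?]]]] ?] [[|[|[|[|?]]]] ?] [[|[|[|[|?]]]] ?] //;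
 move=> a b d; (try by case: a; apply: val_inj); (try by case: b; apply: val_inj);
 (try by case: d; apply: val_inj).
Qed.

Lemma arc_facts (D : digraph) (v w : dvert (line_digraph (line_digraph D))) :
  darc _ v w ->
  let a := proj1_sig (proj1_sig v).1 in
  let b := proj1_sig (proj1_sig v).2 in
  let b' := proj1_sig (proj1_sig w).1 in
  let c := proj1_sig (proj1_sig w).2 in
  [/\ a.2 = b.1, b = b', b'.2 = c.1, darc D a.1 a.2 & darc D b.1 b.2 /\ darc D c.1 c.2].
Proof.
move=> H /=.
case: v H => [[[a Ha] [b Hb]] /= Hab] ; case: w => [[[b' Hb'] [c Hc]] /= Hbc] /= H.
have E := f_equal (@proj1_sig _ _) H; simpl in E. by subst.
Qed.

Lemma chi_DD (D : digraph) : chi_le D 4 -> chi_le (line_digraph (line_digraph D)) 3.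
Proof.
case=> g Hg.
exists (fun v => col (g (proj1_sig (proj1_sig v).1).1) (g (proj1_sig (proj1_sig v).1).2)
                     (g (proj1_sig (proj1_sig v).2).2)).
move=> v w /arc_facts [E1 E2 E3 A1 [A2 A3]].
rewrite -E2 E1; rewrite -E2 in E3.
apply: col_ok; apply: Hg => //.
- by rewrite -E1.
- by rewrite E3.
Qed.

Theorem mainTheorem12 :
  chi_le DDK4 3 /\
  (forall c : dvert DDK4 -> 'I_4,
     explicit_colouring_spec c ->
     (forall v, c v <> four) /\ proper_colouring c) /\
  (forall D : digraph, chi_le D 4 -> chi_le (line_digraph (line_digraph D)) 3).
Proof.
split.
  apply: chi_DD. by exists id => x y.
split; last exact: chi_DD.
move=> c Hc; split.
  move=> v; have [H1 H2] := Hc v.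
  case: (eqVneq (v_j v) four) => [/H2 []//|/eqP h]; by rewrite H1.
move=> v w /arc_facts [E1 E2 E3 A1 [A2 A3]].
have ej : v_i w = v_j v by rewrite /v_i -E2 -E1.
have ek : v_j w = v_k v by rewrite /v_j /v_k E2.
have jk : v_j v <> v_k v by rewrite /v_j /v_k E1.
have [Hv1 Hv2] := Hc v; have [Hw1 Hw2] := Hc w.
case: (eqVneq (v_j v) four) => [hj|/eqP hj].
  have hk : v_k v <> four by rewrite -hj => /esym.
  rewrite Hw1 ek //. by have [_ [_ ?]] := Hv2 hj; auto.
case: (eqVneq (v_k v) four) => [hk|/eqP hk].
  rewrite Hv1 //. have [_ [h _]] := Hw2 (etrans ek hk). by rewrite ej in h; auto.
by rewrite Hv1 // Hw1 ek.
Qed.
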